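(* Let $m,n$ be positive integers with $m$ even ($n$ arbitrary). A matrix $A\in\Gamma^\pi_{m,n}$ is an extreme point of $\Gamma^\pi_{m,n}$ if and only if $A$ is a centrosymmetric rectangular permutation matrix.
   Context: A real $m\times n$ matrix is stochastic if its entries are nonnegative and each row sums to $1$. For $A=(a_{i,j})\in M_{m,n}$, $A^\pi$ is the matrix with $(A^\pi)_{i,j}=a_{m+1-i,n+1-j}$; $A$ is centrosymmetric if $A=A^\pi$. $\Gamma^\pi_{m,n}$ is the convex set of $m\times n$ centrosymmetric stochastic matrices. A rectangular permutation matrix is an $m\times n$ $(0,1)$-matrix with exactly one $1$ in each row. *)

(* Defs.v *)
From mathcomp Require Import all_boot all_order all_algebra.
From mathcomp Require Import reals.
Set Implicit Arguments. Unset Strict Implicit. Unset Printing Implicit Defensive.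
Import Order.TTheory GRing.Theory Num.Theory.
Local Open Scope ring_scope.

(* A^pi : (A^pi)_{i,j} = a_{m+1-i, n+1-j}; with 0-based ordinals this is rev_ord. *)
Definition pimx (R : Type) (m n : nat) (A : 'M[R]_(m, n)) : 'M[R]_(m, n) :=
  \matrix_(i < m, j < n) A (rev_ord i) (rev_ord j).

Definition centrosymmetric (R : Type) (m n : nat) (A : 'M[R]_(m, n)) : Prop :=
  A = pimx A.

Definition stochastic (R : numDomainType) (m n : nat) (A : 'M[R]_(m, n)) : Prop :=
  (forall i j, 0 <= A i j) /\ (forall i, \sum_(j < n) A i j = 1).

Definition in_Gamma_pi (R : numDomainType) (m n : nat) (A : 'M[R]_(m, n)) : Prop :=
  centrosymmetric A /\ stochastic A.

Definition extreme_point (R : numDomainType) (m n : nat)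
    (S : 'M[R]_(m, n) -> Prop) (A : 'M[R]_(m, n)) : Prop :=
  S A /\
  forall (B C : 'M[R]_(m, n)) (t : R), S B -> S C -> 0 < t -> t < 1 ->
    A = t *: B + (1 - t) *: C -> B = A /\ C = A.

Definition rect_perm_mx (R : numDomainType) (m n : nat) (A : 'M[R]_(m, n)) : Prop :=
  (forall i j, A i j = 0 \/ A i j = 1) /\
  (forall i, exists! j, A i j = 1).

(* Main.v *)
Require Import Defs.
From mathcomp Require Import all_boot all_order all_algebra.
From mathcomp Require Import reals.
From mathcomp Require Import lra zify.
Set Implicit Arguments. Unset Strict Implicit. Unset Printing Implicit Defensive.
Import Order.TTheory GRing.Theory Num.Theory.
Local Open Scope ring_scope.

Lemma rev_neq (m : nat) (hm : ~~ odd m) (i : 'I_m) : rev_ord i != i.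
Proof.
apply/eqP => /(congr1 val) /= h.
have hm2 : m = (i.*2).+1 by move: (ltn_ord i) h; rewrite -addnn; lia.
by move: hm; rewrite hm2 /= odd_double.
Qed.

Lemma cent_entry (R : Type) (m n : nat) (A : 'M[R]_(m, n)) :
  centrosymmetric A -> forall i j, A (rev_ord i) (rev_ord j) = A i j.
Proof. by move=> h i j; have := congr1 (fun M : 'M[R]_(m, n) => M i j) h; rewrite mxE => ->. Qed.

Lemma sum_delta (R : realType) (n : nat) (c : 'I_n) :
  \sum_(j < n) ((j == c)%:R : R) = 1.
Proof. by rewrite (bigD1 c) //= eqxx big1 ?addr0 // => j /negbTE ->. Qed.

Lemma no_two_pos (R : realType) (m n : nat) (hmeven : ~~ odd m) (A : 'M[R]_(m, n)) :
  extreme_point (@in_Gamma_pi R m n) A ->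
  forall i0 j0 j1, j0 != j1 -> 0 < A i0 j0 -> 0 < A i0 j1 -> False.
Proof.
move=> [[cA [A0 A1]] ext] i0 j0 j1 nj pj0 pj1.
have hAc := cent_entry cA.
pose eps := Num.min (A i0 j0) (A i0 j1).
have e0 : 0 < eps by rewrite lt_min pj0 pj1.
have e1 : eps <= A i0 j0 by rewrite ge_min lexx.
have e2 : eps <= A i0 j1 by rewrite ge_min lexx orbT.
clearbody eps.
pose e := fun (i : 'I_m) (j : 'I_n) => ((i == i0)%:R * ((j == j0)%:R - (j == j1)%:R) : R).
pose D := \matrix_(i, j) (e i j + e (rev_ord i) (rev_ord j)).
have hDc : forall i j, D (rev_ord i) (rev_ord j) = D i j.
  by move=> i j; rewrite !mxE !rev_ordK addrC.
have hDs : forall i, \sum_j D i j = 0.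
  move=> i; under eq_bigr do rewrite mxE.
  rewrite big_split /= [X in _ + X](reindex_inj rev_ord_inj) /=.
  under [X in _ + X]eq_bigr do rewrite rev_ordK.
  by rewrite /e -!mulr_sumr !sumrB !sum_delta subrr !mulr0 addr0.
have key : forall j, eps * ((j == j0)%:R - (j == j1)%:R) <= A i0 j /\
                     - (eps * ((j == j0)%:R - (j == j1)%:R)) <= A i0 j.
  move=> j; case: (eqVneq j j0) => [->|h0].
    rewrite ?eqxx (negbTE nj) subr0 mulr1; split; lra.
  case: (eqVneq j j1) => [->|h1]; first by rewrite /= sub0r mulrN1 opprK; split; lra.
  rewrite /= subrr mulr0 oppr0; have := A0 i0 j; split; lra.
have hb : forall i j, eps * D i j <= A i j /\ - (eps * D i j) <= A i j.
  move=> i j; rewrite mxE /e.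
  case: (eqVneq i i0) => [->|hi].
    by rewrite ?eqxx (negbTE (rev_neq hmeven i0)) mul0r addr0 mul1r; apply: key.
  rewrite /= mulr0n mul0r add0r.
  case: (eqVneq (rev_ord i) i0) => [hr|hr].
    by rewrite /= mulr1n mul1r -hAc hr; apply: key.
  rewrite /= mulr0n mul0r mulr0; have := A0 i j; split; lra.
have D00 : D i0 j0 = 1.
  by rewrite mxE /e eqxx (negbTE (rev_neq hmeven i0)) (negbTE nj) /= eqxx mul0r addr0 subr0 mul1r.
clearbody D.
pose B := A + eps *: D.
pose C := A - eps *: D.
have gB : in_Gamma_pi B.
  split; [|split].
  - by apply/matrixP => i j; rewrite !mxE hAc hDc.
  - by move=> i j; rewrite !mxE; have := hb i j; lra.
  - move=> i; under eq_bigr do rewrite !mxE.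
    by rewrite big_split /= -mulr_sumr hDs A1 mulr0 addr0.
have gC : in_Gamma_pi C.
  split; [|split].
  - by apply/matrixP => i j; rewrite !mxE hAc hDc.
  - by move=> i j; rewrite !mxE; have := hb i j; lra.
  - move=> i; under eq_bigr do rewrite !mxE.
    by rewrite sumrB /= -mulr_sumr hDs A1 mulr0 subr0.
have hdec : A = (1/2) *: B + (1 - 1/2) *: C.
  apply/matrixP => i j; rewrite !mxE; lra.
have h12 : (0:R) < 1/2 by lra.
have h12' : (1/2:R) < 1 by lra.
have [hB _] := ext B C (1/2) gB gC h12 h12' hdec.
have := congr1 (fun M : 'M[R]_(m, n) => M i0 j0) hB; rewrite !mxE D00 /=; lra.
Qed.

Theorem mainTheorem3 (R : realType) (m n : nat) (hm : (0 < m)%N) (hn : (0 < n)%N)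
    (hmeven : ~~ odd m) (A : 'M[R]_(m, n)) (hA : in_Gamma_pi A) :
  extreme_point (@in_Gamma_pi R m n) A <-> (rect_perm_mx A /\ centrosymmetric A).
Proof.
have [cA [A0 A1]] := hA.
split.
- move=> ext; have np := no_two_pos hmeven ext.
  have le1 : forall i j, A i j <= 1.
    move=> i j; rewrite -(A1 i) (bigD1 j) //= lerDl sumr_ge0 // => k _; exact: A0.
  have h01 : forall i j, A i j = 0 \/ A i j = 1.
    move=> i j; case: (eqVneq (A i j) 0) => [->|h0]; first by left.
    right; apply/eqP; rewrite eq_le le1 /= leNgt; apply/negP => lt1.
    have pj : 0 < A i j by rewrite lt_neqAle eq_sym h0 A0.
    case: (pickP (fun j1 => (j1 != j) && (0 < A i j1))) => [j1 /andP[hj1 hp]|hnone].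
      by apply: (np i j j1) => //; rewrite eq_sym.
    have := A1 i; rewrite (bigD1 j) //= big1 ?addr0.
      by move=> h; move: lt1; rewrite h ltxx.
    move=> k hk; have := hnone k; rewrite hk /= => /negbT; rewrite -leNgt => hle.
    by apply/eqP; rewrite eq_le hle A0.
  split => //; split => // i.
  case: (pickP (fun j => A i j == 1)) => [j /eqP hj|hnone].
    exists j; split => // j' hj'; apply/eqP; apply: contraT => hne.
    have hne' : j != j' by [].  
    have p1 : 0 < A i j by rewrite hj ltr01.
    have p2 : 0 < A i j' by rewrite hj' ltr01.
    by case: (np i j j' hne' p1 p2).
  have hs : \sum_(j < n) A i j = 0.
    apply: big1 => j _; case: (h01 i j) => // h; by move: (hnone j); rewrite h eqxx.
  by move: (A1 i); rewrite hs => /eqP; rewrite eq_sym oner_eq0.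
- move=> [[h01 hone] _]; split => //.
  move=> B C t [cB [B0 B1]] [cC [C0 C1]] t0 t1 hABC.
  have z : forall i j, A i j = 0 -> B i j = 0 /\ C i j = 0.
    move=> i j h; have := congr1 (fun M : 'M[R]_(m, n) => M i j) hABC.
    rewrite !mxE h => e.
    have hb := mulr_ge0 (ltW t0) (B0 i j).
    have hc : 0 <= (1 - t) * C i j by apply: mulr_ge0; [lra | exact: C0].
    have tb : t * B i j = 0 by lra.
    have tc : (1 - t) * C i j = 0 by lra.
    move: tb tc => /eqP; rewrite mulf_eq0 => /orP [/eqP|/eqP ->]; first lra.
    move=> /eqP; rewrite mulf_eq0 => /orP [/eqP|/eqP ->]; first lra.
    by [].
  have all : forall i j, B i j = A i j /\ C i j = A i j.
    move=> i j; case: (h01 i j) => hA1; first by rewrite hA1; apply: z.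
    have others : forall k, k != j -> A i k = 0.
      move=> k hk; case: (h01 i k) => // h1; have [j' [_ u]] := hone i.
      by move: hk; rewrite -(u _ hA1) (u _ h1) eqxx.
    rewrite hA1; split.
      rewrite -(B1 i) (bigD1 j) //= big1 ?addr0 // => k hk.
      by have [] := z i k (others k hk).
    rewrite -(C1 i) (bigD1 j) //= big1 ?addr0 // => k hk.
    by have [] := z i k (others k hk).
  by split; apply/matrixP => i j; have [] := all i j.
Qed.
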